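(* Let $n\geq 5$, let $S$ be the set of all $3$-cycles in $S_n$, and let $CAG_n=\mathrm{Cay}(A_n,S)$. Let $\tau,\kappa\in S$ with $\tau\neq\kappa$. Then $\tau\kappa=\kappa\tau\neq e$ if and only if there is a unique $4$-cycle in $CAG_n$ containing the vertices $e$, $\tau$ and $\kappa$.
   Context: For a finite group $\Gamma$ and a subset $T\subseteq\Gamma$ with $e\notin T$ and $T=T^{-1}$, the Cayley graph $\mathrm{Cay}(\Gamma,T)$ is the undirected graph with vertex set $\Gamma$ and edge set $\{\{\gamma,t\gamma\}\mid \gamma\in\Gamma, t\in T\}$. $e$ denotes the identity permutation. *)

(* Defs.v *)
From mathcomp Require Import all_boot all_fingroup all_solvable.
Set Implicit Arguments. Unset Strict Implicit. Unset Printing Implicit Defensive.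
Local Open Scope group_scope.

Definition is_3cycle (n : nat) (s : 'S_n) : bool :=
  [exists a : 'I_n, exists b : 'I_n, exists c : 'I_n,
    [&& a != b, b != c, a != c, s a == b, s b == c, s c == a &
        [forall x : 'I_n, [&& x != a, x != b & x != c] ==> (s x == x)]]].

Definition three_cycles (n : nat) : {set 'S_n} :=
  [set s : 'S_n | is_3cycle s].

Definition cay_adj (gT : finGroupType) (Gamma T : {set gT}) (x y : gT) : bool :=
  [&& x \in Gamma, y \in Gamma & y * x^-1 \in T].

Definition CAG_adj (n : nat) : rel 'S_n :=
  fun x y => cay_adj (Alt 'I_n) (three_cycles n) x y.

(* A 4-cycle of a graph with adjacency adj, viewed as a subgraph, is given by
   its edge set {ab, bc, cd, da} for pairwise distinct vertices a,b,c,d with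
   those four pairs adjacent. *)
Definition is_4cycle (T : finType) (adj : rel T) (C : {set {set T}}) : Prop :=
  exists a b c d : T,
    [/\ [&& a != b, a != c, a != d, b != c, b != d & c != d],
        [/\ adj a b, adj b c, adj c d & adj d a] &
        C = [set [set a; b]; [set b; c]; [set c; d]; [set d; a]]].

Definition cycle_vertices (T : finType) (C : {set {set T}}) : {set T} := cover C.

(* Main.v *)
Require Import Defs.
From mathcomp Require Import all_boot all_fingroup all_solvable.
From mathcomp Require Import zify.
Set Implicit Arguments. Unset Strict Implicit. Unset Printing Implicit Defensive.
Local Open Scope group_scope.

Ltac prep := repeat match goal with H : is_true (?x != ?y) |- _ =>
  lazymatch goal with
  | _ : (x == y) = false |- _ => fail
  | _ => let H1 := fresh "F" in let H2 := fresh "F" in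
    have H1 := negbTE H; (have H2 : (y == x) = false by rewrite eq_sym (negbTE H));
    let H3 := fresh "N" in (have H3 : y != x by rewrite eq_sym H)
  end end.
Ltac sneq := repeat (match goal with
  | H : (?x == ?y) = false |- context [?x == ?y] => rewrite H
  | |- context [?x == ?x] => rewrite eqxx
  end; cbv beta iota); try done.

Ltac c3 x a b c := case: (x =P a) => [->|/eqP ?]; [|case: (x =P b) => [->|/eqP ?]; [|case: (x =P c) => [->|/eqP ?]]]; prep; sneq.
Ltac c4 x a b c d := case: (x =P a) => [->|/eqP ?]; [|case: (x =P b) => [->|/eqP ?]; [|case: (x =P c) => [->|/eqP ?]; [|case: (x =P d) => [->|/eqP ?]]]]; prep; sneq.
Ltac ifs := repeat (case: ifP => [/eqP ? | ?]; try subst; prep; sneq); try done.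

Section C3.
Variable n : nat.
Implicit Types (a b c d x y : 'I_n) (p q : 'S_n).

Definition cyc3 a b c : 'S_n := tperm a b * tperm a c.

Lemma cyc3E a b c x : a != b -> b != c -> a != c ->
  cyc3 a b c x = if x == a then b else if x == b then c else if x == c then a else x.
Proof.
move=> ab bc ac; rewrite permM.
case: (x =P a) => [->|xa]; first by rewrite tpermL tpermD // eq_sym.
case: (x =P b) => [->|xb]; first by rewrite tpermR tpermL.
move/eqP: xa => xa; move/eqP: xb => xb.
rewrite (tpermD (x:=a) (y:=b)); try by rewrite eq_sym.
case: (x =P c) => [->|/eqP xc]; first by rewrite tpermR.
by rewrite tpermD // eq_sym.
Qed.

Lemma cyc3_even a b c : a != b -> a != c -> cyc3 a b c \in Alt 'I_n.
Proof. by move=> ab ac; rewrite Alt_even odd_permM !odd_tperm ab ac. Qed.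

Lemma cyc3_is3 a b c : a != b -> b != c -> a != c -> is_3cycle (cyc3 a b c).
Proof.
move=> ab bc ac; apply/existsP; exists a; apply/existsP; exists b; apply/existsP; exists c.
rewrite ab bc ac /=.
have E := cyc3E _ ab bc ac.
rewrite !E.
have H: forall x, [&& x != a, x != b & x != c] ==> (cyc3 a b c x == x).
  move=> x; apply/implyP=> /and3P[xa xb xc]; rewrite E.
  by prep; sneq.
by prep; sneq; apply/forallP.
Qed.

Lemma cyc3_rot a b c : a != b -> b != c -> a != c -> cyc3 a b c = cyc3 b c a.
Proof.
move=> ab bc ac; have ca : c != a by rewrite eq_sym.
apply/permP => x; rewrite !cyc3E //; prep; ifs; by rewrite eq_sym.
Qed.

Lemma cyc3V a b c : a != b -> b != c -> a != c -> (cyc3 a b c)^-1 = cyc3 a c b.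
Proof.
move=> ab bc ac; have cb : c != b by rewrite eq_sym.
apply/eqP; rewrite eq_invg_mul; apply/eqP/permP => x.
rewrite permM perm1; c3 x a b c; rewrite ?cyc3E //; prep; sneq.
Qed.

Lemma cyc3J a b c q : a != b -> b != c -> a != c ->
  (cyc3 a b c) ^ q = cyc3 (q a) (q b) (q c).
Proof.
move=> ab bc ac; apply/permP => x; rewrite -(permKV q x); set y := q^-1 x.
rewrite permJ !cyc3E ?(inj_eq perm_inj) //.
by case: ifP => _ //; case: ifP => _ //; case: ifP.
Qed.

Lemma is3_cyc3 p : is_3cycle p ->
  exists a, exists b, exists c, [/\ a != b, b != c, a != c & p = cyc3 a b c].
Proof.
case/existsP=> a /existsP[b /existsP[c /and4P[ab bc ac /and4P[/eqP pa /eqP pb /eqP pc /forallP H]]]].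
exists a, b, c; split => //; apply/permP => x; rewrite cyc3E //.
case: ifP => [/eqP -> //|xa]; case: ifP => [/eqP -> //|xb]; case: ifP => [/eqP -> //|xc].
by have /implyP/(_ _)/eqP -> := H x; rewrite // xa xb xc.
Qed.

Lemma in3 p : (p \in three_cycles n) = is_3cycle p.
Proof. by rewrite inE. Qed.

Lemma S_inv p : p \in three_cycles n -> p^-1 \in three_cycles n.
Proof.
rewrite !in3 => /is3_cyc3[a [b [c [ab bc ac ->]]]]; rewrite cyc3V //.
by apply: cyc3_is3; rewrite // eq_sym.
Qed.

Lemma S_conj p q : p \in three_cycles n -> p ^ q \in three_cycles n.
Proof.
rewrite !in3 => /is3_cyc3[a [b [c [ab bc ac ->]]]]; rewrite cyc3J //.
by apply: cyc3_is3; rewrite ?(inj_eq perm_inj).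
Qed.

Lemma S_alt p : p \in three_cycles n -> p \in Alt 'I_n.
Proof. by rewrite !in3 => /is3_cyc3[a [b [c [ab bc ac ->]]]]; apply: cyc3_even. Qed.

Lemma S_neq1 p : p \in three_cycles n -> p != 1.
Proof.
rewrite !in3 => /is3_cyc3[a [b [c [ab bc ac ->]]]]; apply/eqP => /permP /(_ a).
by rewrite cyc3E // perm1 eqxx => /eqP; rewrite eq_sym (negbTE ab).
Qed.
End C3.

Section Graph.
Variable T : finType.
Implicit Types a b c d x : T.

Definition E4 a b c d : {set {set T}} := [set [set a; b]; [set b; c]; [set c; d]; [set d; a]].

Lemma cover_E4 a b c d x :
  (x \in cover (E4 a b c d)) = [|| x == a, x == b, x == c | x == d].
Proof.
apply/bigcupP/idP.
  case=> B; rewrite /E4 !inE -!orbA => /or4P[]/eqP-> ; rewrite !inE => /orP[]->; by rewrite ?orbT.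
case/or4P => /eqP->.
- by exists [set a; b]; rewrite /E4 !inE ?eqxx ?orbT.
- by exists [set b; c]; rewrite /E4 !inE ?eqxx ?orbT.
- by exists [set c; d]; rewrite /E4 !inE ?eqxx ?orbT.
- by exists [set d; a]; rewrite /E4 !inE ?eqxx ?orbT.
Qed.

Lemma E4rot a b c d : E4 a b c d = E4 b c d a.
Proof.
apply/setP=> z; rewrite !inE.
by case: (z == [set a; b]); case: (z == [set b; c]); case: (z == [set c; d]); case: (z == [set d; a]).
Qed.

Lemma E4refl a b c d : E4 a b c d = E4 a d c b.
Proof.
have s2 : forall x y : T, [set x; y] = [set y; x] by move=> x y; apply: setUC.
rewrite /E4 (s2 a d) (s2 d c) (s2 c b) (s2 b a).
apply/setP=> z; rewrite !inE.
by case: (z == [set a; b]); case: (z == [set b; c]); case: (z == [set c; d]); case: (z == [set d; a]).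
Qed.

Ltac e4 := first [ reflexivity
  | rewrite [LHS]E4rot; reflexivity
  | rewrite [LHS]E4rot [LHS]E4rot; reflexivity
  | rewrite [LHS]E4rot [LHS]E4rot [LHS]E4rot; reflexivity
  | rewrite [LHS]E4refl; reflexivity
  | rewrite [LHS]E4refl [LHS]E4rot; reflexivity
  | rewrite [LHS]E4refl [LHS]E4rot [LHS]E4rot; reflexivity
  | rewrite [LHS]E4refl [LHS]E4rot [LHS]E4rot [LHS]E4rot; reflexivity ].

Lemma four_shape (adj : rel T) (sym : forall x y, adj x y -> adj y x) C u v w :
  is_4cycle adj C -> u \in cover C -> v \in cover C -> w \in cover C ->
  u != v -> u != w -> v != w -> ~~ adj v w ->
  exists x, [/\ adj v x, adj x w, x != u & C = E4 u v x w].
Proof.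
case=> a [b [c [d [dist [ab bc cd da] ->]]]].
case/and5P: dist => nab nac nad nbc /andP[nbd ncd].
rewrite !cover_E4 => hu hv hw uv uw vw nadj.
have ba := sym _ _ ab; have cb := sym _ _ bc; have dc := sym _ _ cd; have ad := sym _ _ da.
have nba : b != a by rewrite eq_sym. have nca : c != a by rewrite eq_sym.
have nda : d != a by rewrite eq_sym. have ncb : c != b by rewrite eq_sym.
have ndb : d != b by rewrite eq_sym. have ndc : d != c by rewrite eq_sym.
case/or4P: hu => /eqP ?; subst u; case/or4P: hv => /eqP ?; subst v;
  case/or4P: hw => /eqP ?; subst w;
  try (match goal with H : is_true (?x != ?x) |- _ => by rewrite eqxx in H end);
  try (match goal with H : is_true (~~ adj ?x ?y), H' : is_true (adj ?x ?y) |- _ => by rewrite H' in H end);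
  first [ exists a; split; [done|done|done|e4]
        | exists b; split; [done|done|done|e4]
        | exists c; split; [done|done|done|e4]
        | exists d; split; [done|done|done|e4] ].
Qed.
Lemma P_E4 (adj : rel T) u v x w :
  [&& u != v, u != x, u != w, v != x, v != w & x != w] ->
  adj u v -> adj v x -> adj x w -> adj w u -> is_4cycle adj (E4 u v x w).
Proof. by move=> D h1 h2 h3 h4; exists u, v, x, w; split. Qed.

Lemma set2_in a b c d : [set a; b] = [set c; d] -> (a \in [set c; d]) && (b \in [set c; d]).
Proof. by move=> e; rewrite -e !inE !eqxx orbT. Qed.
End Graph.

Section Grp.
Variable n : nat.
Implicit Types (a b c d e f y : 'I_n) (p q x : 'S_n).
Local Notation S := (three_cycles n).
Local Notation adj := (@CAG_adj n).

Lemma adj_sym p q : adj p q -> adj q p.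
Proof.
case/and3P=> hx hy hs; apply/and3P; split => //.
by have := S_inv hs; rewrite invgM invgK.
Qed.

Lemma adjI p q : p \in Alt 'I_n -> q * p^-1 \in S -> adj p q.
Proof.
move=> hx hs; apply/and3P; split => //.
by rewrite -(mulgVK p q); apply: groupM => //; apply: S_alt.
Qed.

Definition supp p := [set y | p y != y].

Lemma suppM p q : supp (p * q) \subset supp p :|: supp q.
Proof.
apply/subsetP=> y; rewrite !inE permM; apply: contraR; rewrite negb_or !negbK.
by move=> /andP[/eqP -> /eqP ->].
Qed.

Lemma supp3 p : p \in S -> #|supp p| <= 3.
Proof.
rewrite in3 => /is3_cyc3[a [b [c [ab bc ac ->]]]].
apply: (leq_trans _ (card_size [:: a; b; c])); apply: subset_leq_card.
apply/subsetP=> y; rewrite !inE cyc3E //; apply: contraR; rewrite !negb_or => /and3P[ya yb yc].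
by rewrite (negbTE ya) (negbTE yb) (negbTE yc) eqxx.
Qed.

Ltac unU := rewrite /= ?inE ?negb_or;
  repeat (let H := fresh "U" in (case/andP || move=> H)).

Lemma W_supp a b c d e f : uniq [:: a; b; c; d; e; f] ->
  [:: a; b; c; d; e; f] \subset supp (cyc3 d e f * (cyc3 a b c)^-1)
  /\ (forall y, y \notin [:: a; b; c; d; e; f] -> (cyc3 d e f * (cyc3 a b c)^-1) y = y).
Proof.
unU; prep; split.
  apply/subsetP=> y; rewrite !inE.
  by repeat (case/orP; [move/eqP->|]); try move/eqP->;
    rewrite permM cyc3V // !cyc3E //; sneq.
move=> y; rewrite !inE !negb_or => /and5P[ya yb yc yd /andP[ye yf]].
by rewrite permM cyc3V // !cyc3E //; prep; sneq.
Qed.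

Lemma arith6 (u i x y : nat) : 6 <= u -> u + i = x + y -> x <= 3 -> y <= 3 -> 0 < i -> False.
Proof. lia. Qed.

Lemma middle a b c d e f x : uniq [:: a; b; c; d; e; f] ->
  x * (cyc3 a b c)^-1 \in S -> x * (cyc3 d e f)^-1 \in S -> x != 1 ->
  x = cyc3 d e f * cyc3 a b c.
Proof.
move=> U hs ht hx.
have [Wsub Wfix] := W_supp U.
have := U; unU; prep.
set tau := cyc3 a b c in hs Wsub Wfix *; set kap := cyc3 d e f in ht Wsub Wfix *.
have ht' := S_inv ht; set t := (x * kap^-1)^-1 in ht'.
set s := x * tau^-1 in hs.
have hW : kap * tau^-1 = t * s.
  by rewrite /t /s (invgM x kap^-1) invgK -(mulgA kap x^-1) mulKg.
rewrite hW in Wsub Wfix.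
have c6 : 6 <= #|supp t :|: supp s|.
  have := subset_leq_card (subset_trans Wsub (suppM t s)).
  by move/card_uniqP: U => ->.
have disj : forall y, y \in supp s -> y \notin supp t.
  move=> y ys; apply/negP => yt.
  have := cardsUI (supp t) (supp s); have := supp3 ht'; have := supp3 hs.
  have : 0 < #|supp t :&: supp s|.
    by apply/card_gt0P; exists y; rewrite inE yt.
  move=> h1 h2 h3 h4; exact: (arith6 c6 h4 h3 h2 h1).
have hx' : x = s * tau by rewrite /s mulgVK.
move: hs; rewrite in3 => /is3_cyc3[p1 [p2 [p3 [h12 h23 h13 es]]]].
have sp1 : s p1 = p2 by rewrite es cyc3E // eqxx.
have sp2 : s p2 = p3 by rewrite es cyc3E // eqxx; prep; sneq.
have p1s : p1 \in supp s by rewrite inE sp1 eq_sym.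
have p2s : p2 \in supp s by rewrite inE sp2 eq_sym.
have tp1 : t p1 = p1 by move: (disj _ p1s); rewrite inE negbK => /eqP.
have tp2 : t p2 = p2 by move: (disj _ p2s); rewrite inE negbK => /eqP.
have W1 : (t * s) p1 = p2 by rewrite permM tp1.
have W2 : (t * s) p2 = p3 by rewrite permM tp2.
have p1l : p1 \in [:: a; b; c; d; e; f].
  by apply: contraT => /Wfix; rewrite W1 => e21; move: h12; rewrite e21 eqxx.
rewrite -hW in W1 W2.
have r_a : cyc3 a c b = tau^-1 by rewrite /tau; symmetry; apply: cyc3V.
have r_b : cyc3 b a c = tau^-1 by rewrite -r_a cyc3_rot.
have r_c : cyc3 c b a = tau^-1 by rewrite -r_b cyc3_rot.
have k_f : cyc3 f d e = kap by rewrite /kap cyc3_rot // cyc3_rot.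
have k_e : cyc3 e f d = kap by rewrite /kap cyc3_rot.
move: hx; rewrite hx' es.
move: p1l W1 W2; rewrite /tau /kap !inE.
clear sp1 sp2 p1s p2s tp1 tp2 disj.
by repeat (case/orP; [move/eqP=> ?; subst p1|]); try (move/eqP=> ?; subst p1);
  rewrite permM cyc3V // !cyc3E //; sneq; move=> ?; subst p2;
  rewrite permM !cyc3E //; sneq; move=> ?; subst p3;
  rewrite ?r_a ?r_b ?r_c ?k_e ?k_f ?mulVg ?eqxx.
Qed.

Lemma nonadj a b c d e f : uniq [:: a; b; c; d; e; f] ->
  ~~ adj (cyc3 a b c) (cyc3 d e f).
Proof.
move=> U; have [Wsub _] := W_supp U.
apply/negP => /and3P[_ _ /supp3 h].
have := subset_leq_card Wsub; move/card_uniqP: U => ->.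
by move=> h6; have := leq_trans h6 h.
Qed.

Lemma comm_uniq a b c d e f : a != b -> b != c -> a != c -> d != e -> e != f -> d != f ->
  cyc3 a b c * cyc3 d e f = cyc3 d e f * cyc3 a b c -> cyc3 a b c != cyc3 d e f ->
  cyc3 a b c * cyc3 d e f != 1 -> uniq [:: a; b; c; d; e; f].
Proof.
move=> ab bc ac de ef df hc hne h1.
have inv : forall y, cyc3 a b c y != y -> cyc3 a b c (cyc3 d e f y) != cyc3 d e f y.
  move=> y hy; apply: contra hy => /eqP h.
  have := congr1 (fun p : 'S_n => p y) hc; rewrite /= (permM (cyc3 a b c)) (permM (cyc3 d e f)) h => /perm_inj ->.
  by [].
have mv : forall y, (cyc3 a b c y != y) = (y \in [:: a; b; c]).
  move=> y; rewrite cyc3E // !inE.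
  case: (y =P a) => [->|/eqP ya]; first by rewrite eq_sym ab.
  case: (y =P b) => [->|/eqP yb]; first by rewrite eq_sym bc.
  case: (y =P c) => [->|/eqP yc]; first by rewrite eq_sym eq_sym ac.
  by rewrite eqxx.
have kd : cyc3 d e f d = e by rewrite cyc3E // eqxx.
have ke : cyc3 d e f e = f by rewrite cyc3E // eqxx; prep; sneq.
have kf : cyc3 d e f f = d by rewrite cyc3E // eqxx; prep; sneq.
prep.
have t_b : cyc3 b c a = cyc3 a b c by rewrite [RHS]cyc3_rot.
have t_c : cyc3 c a b = cyc3 a b c by rewrite [RHS]cyc3_rot // [RHS]cyc3_rot.
have r_a : cyc3 a c b = (cyc3 a b c)^-1 by rewrite cyc3V.
have r_b : cyc3 b a c = (cyc3 a b c)^-1 by rewrite -r_a [RHS]cyc3_rot // [RHS]cyc3_rot.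
have r_c : cyc3 c b a = (cyc3 a b c)^-1 by rewrite -r_a [RHS]cyc3_rot.
case: (boolP (cyc3 a b c d != d)) => hd.
  have he := inv _ hd; rewrite kd in he.
  have hf := inv _ he; rewrite ke in hf.
  rewrite !mv !inE in hd he hf.
  clear inv mv kd ke kf.
  move: hd he hf hne h1 de ef df.
  do 3 (case/or3P => /eqP ?; subst); rewrite ?t_b ?t_c ?r_a ?r_b ?r_c ?mulgV ?eqxx //.
move: hd; rewrite negbK => hd.
have hf : cyc3 a b c f = f.
  apply/eqP; apply: contraT => /inv; rewrite kf; by rewrite hd.
have he : cyc3 a b c e = e.
  by apply/eqP; apply: contraT => /inv; rewrite ke hf eqxx.
have nd := mv d; have ne := mv e; have nf := mv f.
rewrite hd in nd; rewrite he eqxx in ne; rewrite hf eqxx in nf.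
move: nd ne nf; rewrite !inE => /esym/negbT nd /esym/negbT ne /esym/negbT nf.
rewrite !negb_or in nd ne nf.
case/and3P: nd => ? ? ?; case/and3P: ne => ? ? ?; case/and3P: nf => ? ? ?.
by rewrite /= !inE !negb_or; prep; sneq.
Qed.

Lemma neq_mulr p q : q != 1 -> q * p != p.
Proof. by apply: contra => /eqP e; rewrite -(mulgK p q) e mulgV. Qed.

Lemma neq_mull p q : q != 1 -> p * q != p.
Proof. by apply: contra => /eqP e; rewrite -(mulKg p q) e mulVg. Qed.

Lemma adj1 p : p \in S -> adj 1 p.
Proof. by move=> h; apply: adjI; rewrite ?group1 // invg1 mulg1. Qed.

Lemma adj1' p : p \in S -> adj p 1.
Proof. by move=> h; apply: adj_sym; apply: adj1. Qed.

Lemma adj_l p q : p \in S -> q \in S -> adj p (q * p).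
Proof. by move=> hp hq; apply: adjI; rewrite ?S_alt // mulgK. Qed.

Lemma adj_r p q : p \in S -> q \in S -> adj (q * p) q.
Proof.
move=> hp hq; apply: adjI; first by rewrite groupM ?S_alt.
have -> : q * (q * p)^-1 = (p^-1) ^ (q^-1) by rewrite invgM conjgE invgK mulgA.
by apply: S_conj; apply: S_inv.
Qed.

Lemma fwd tau kappa : tau \in S -> kappa \in S -> tau != kappa ->
  tau * kappa = kappa * tau -> tau * kappa != 1 ->
  exists! C : {set {set 'S_n}}, is_4cycle adj C /\
     [/\ 1 \in cycle_vertices C, tau \in cycle_vertices C & kappa \in cycle_vertices C].
Proof.
move=> ht hk hne hc h1.
have t1 := S_neq1 ht; have k1 := S_neq1 hk.
have kt1 : kappa * tau != 1 by rewrite -hc.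
exists (E4 1 tau (kappa * tau) kappa); split.
  split.
    apply: P_E4.
    - rewrite eq_sym t1 eq_sym kt1 eq_sym k1 /= eq_sym neq_mulr //= hne /=.
      by rewrite neq_mull.
    - exact: adj1.
    - exact: adj_l.
    - exact: adj_r.
    - exact: adj1'.
  by rewrite /cycle_vertices !cover_E4 !eqxx !orbT.
move=> C [h4 [v1 vt vk]].
have := ht; rewrite in3 => /is3_cyc3[a [b [c [ab bc ac Et]]]].
have := hk; rewrite in3 => /is3_cyc3[d [e [f [de ef df Ek]]]].
subst tau kappa.
have U := comm_uniq ab bc ac de ef df hc hne h1.
have t1' : 1 != cyc3 a b c by rewrite eq_sym.
have k1' : 1 != cyc3 d e f by rewrite eq_sym.
have [x [hx1 hx2 hx3 ->]] := four_shape (@adj_sym) h4 v1 vt vk t1' k1' hne (nonadj U).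
have hxt : x * (cyc3 a b c)^-1 \in S by case/and3P: hx1.
have hxk : x * (cyc3 d e f)^-1 \in S by case/and3P: (adj_sym hx2).
by rewrite (middle U hxt hxk hx3).
Qed.

Lemma adj_l' p q : p \in S -> q \in S -> adj p (p * q).
Proof.
move=> hp hq; apply: adjI; rewrite ?S_alt //.
have -> : p * q * p^-1 = q ^ (p^-1) by rewrite conjgE invgK mulgA.
exact: S_conj.
Qed.

Lemma adj_r' p q : p \in S -> q \in S -> adj (p * q) q.
Proof.
move=> hp hq; apply: adjI; first by rewrite groupM ?S_alt.
by rewrite invgM mulgA mulgV mul1g; apply: S_inv.
Qed.

Lemma neq_at p q y : p y != q y -> p != q.
Proof. by apply: contra => /eqP ->. Qed.

Lemma extra a b c : 3 < n -> exists d, d \notin [:: a; b; c].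
Proof.
move=> h; case: (pickP (fun d => d \notin [:: a; b; c])) => [d hd|none]; first by exists d.
have sub : [set: 'I_n] \subset [:: a; b; c].
  by apply/subsetP => y _; move: (none y) => /negbFE.
have := leq_trans (subset_leq_card sub) (card_size _).
by rewrite cardsT card_ord /= leqNgt h.
Qed.

Definition Pc tau kappa (C : {set {set 'S_n}}) := is_4cycle adj C /\
     [/\ 1 \in cycle_vertices C, tau \in cycle_vertices C & kappa \in cycle_vertices C].

Lemma conv tau kappa : 5 <= n -> tau \in S -> kappa \in S -> tau != kappa ->
  (exists! C, Pc tau kappa C) -> tau * kappa = kappa * tau /\ tau * kappa != 1.
Proof.
move=> hn ht hk hne [C0 [_ uq]].
have two : forall C1 C2, Pc tau kappa C1 -> Pc tau kappa C2 -> C1 != C2 -> False.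
  by move=> C1 C2 p1 p2; rewrite -(uq _ p1) -(uq _ p2) eqxx.
have t1 := S_neq1 ht; have k1 := S_neq1 hk.
case: (boolP (tau * kappa == kappa * tau)) => hc; last first.
  have tk1 : tau * kappa != 1.
    apply: contra hc => /eqP e.
    have ek : kappa = tau^-1 by rewrite -(mulKg tau kappa) e mulg1.
    by rewrite ek mulgV mulVg.
  have tkt := neq_mull tau k1; have tkk := neq_mulr kappa t1.
  have ktt := neq_mulr tau k1; have ktk := neq_mull kappa t1.
  have kt1 : kappa * tau != 1.
    apply: contra hc => /eqP e.
    have ek : kappa = tau^-1 by rewrite -(mulgK tau kappa) e mul1g.
    by rewrite ek mulgV mulVg.
  exfalso; apply: (two (E4 1 tau (tau * kappa) kappa) (E4 1 tau (kappa * tau) kappa)).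
  - split; last by rewrite /cycle_vertices !cover_E4 !eqxx !orbT.
    apply: P_E4; last exact: adj1'; last exact: adj_r'; last exact: adj_l'; last exact: adj1.
    by rewrite !(eq_sym 1) t1 tk1 k1 /= eq_sym tkt hne /=.
  - split; last by rewrite /cycle_vertices !cover_E4 !eqxx !orbT.
    apply: P_E4; last exact: adj1'; last exact: adj_r; last exact: adj_l; last exact: adj1.
    by rewrite !(eq_sym 1) t1 kt1 k1 /= eq_sym ktt hne /=.
  apply/negP => /eqP E.
  have : [set tau; tau * kappa] \in E4 1 tau (kappa * tau) kappa by rewrite -E /E4 !inE eqxx ?orbT.
  rewrite /E4 !inE -!orbA; prep.
  by case/or4P => /eqP/set2_in; rewrite !inE; sneq.
case: (boolP (tau * kappa == 1)) => h1; last by split => //; apply/eqP.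
exfalso.
have ek : kappa = tau^-1 by rewrite -(mulKg tau kappa) (eqP h1) mulg1.
move: ht; rewrite in3 => /is3_cyc3[a [b [c [ab bc ac Et]]]].
have [d hd] := extra a b c (ltnW hn).
move: hd; rewrite !inE !negb_or => /and3P[da db dc].
subst tau; rewrite cyc3V // in ek; subst kappa.
have ht : cyc3 a b c \in S by rewrite in3 cyc3_is3.
prep.
have hr : cyc3 a b d \in S by rewrite in3 cyc3_is3.
have hr' : cyc3 a d b \in S by rewrite in3 cyc3_is3.
have p1 : cyc3 a b c * (cyc3 a b d)^-1 = cyc3 b c d.
  by rewrite cyc3V //; apply/permP => y; rewrite permM; c4 y a b c d; rewrite !cyc3E //; sneq.
have p2 : cyc3 a c b * (cyc3 a b c)^-1 = cyc3 a b c.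
  by rewrite cyc3V //; apply/permP => y; rewrite permM; c4 y a b c d; rewrite !cyc3E //; sneq.
have p3 : cyc3 a c b * (cyc3 a d b)^-1 = cyc3 a c d.
  by rewrite cyc3V //; apply/permP => y; rewrite permM; c4 y a b c d; rewrite !cyc3E //; sneq.
have p4 : cyc3 a b c * (cyc3 a c b)^-1 = cyc3 a c b.
  by rewrite cyc3V //; apply/permP => y; rewrite permM; c4 y a b c d; rewrite !cyc3E //; sneq.
have q1 : cyc3 a b d != cyc3 a b c by apply: (@neq_at _ _ b); rewrite !cyc3E //; sneq.
have q2 : cyc3 a b d != cyc3 a c b by apply: (@neq_at _ _ a); rewrite !cyc3E //; sneq.
have q3 : cyc3 a d b != cyc3 a c b by apply: (@neq_at _ _ a); rewrite !cyc3E //; sneq.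
have q4 : cyc3 a d b != cyc3 a b c by apply: (@neq_at _ _ a); rewrite !cyc3E //; sneq.
have q5 : cyc3 a b d != cyc3 a d b by apply: (@neq_at _ _ a); rewrite !cyc3E //; sneq.
have r1 := S_neq1 hr; have r1' := S_neq1 hr'.
apply: (two (E4 1 (cyc3 a b d) (cyc3 a b c) (cyc3 a c b))
            (E4 1 (cyc3 a d b) (cyc3 a c b) (cyc3 a b c))).
- split; last by rewrite /cycle_vertices !cover_E4 !eqxx !orbT.
  apply: P_E4.
  + by prep; sneq.
  + exact: adj1.
  + by apply: adjI; rewrite ?S_alt // p1 in3 cyc3_is3.
  + by apply: adjI; rewrite ?S_alt // p2.
  + exact: adj1'.
- split; last by rewrite /cycle_vertices !cover_E4 !eqxx !orbT.
  apply: P_E4.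
  + by prep; sneq.
  + exact: adj1.
  + by apply: adjI; rewrite ?S_alt // p3 in3 cyc3_is3.
  + by apply: adjI; rewrite ?S_alt // p4.
  + exact: adj1'.
apply/negP => /eqP E.
have : [set 1; cyc3 a b d] \in E4 1 (cyc3 a d b) (cyc3 a c b) (cyc3 a b c).
  by rewrite -E /E4 !inE eqxx.
rewrite /E4 !inE -!orbA; prep.
by case/or4P => /eqP/set2_in; rewrite !inE; sneq.
Qed.



End Grp.

Theorem lemma3p1 (n : nat) (hn : 5 <= n) (tau kappa : 'S_n)
  (htau : tau \in three_cycles n) (hkappa : kappa \in three_cycles n)
  (hne : tau != kappa) :
  (tau * kappa = kappa * tau /\ tau * kappa != 1) <->
  (exists! C : {set {set 'S_n}},
     is_4cycle (@CAG_adj n) C /\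
     [/\ 1 \in cycle_vertices C, tau \in cycle_vertices C & kappa \in cycle_vertices C]).
Proof.
split.
  by case=> hc h1; apply: fwd.
by move=> h; exact: (conv hn htau hkappa hne h).
Qed.
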